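(* Let $G=(V,E)$ be a finite simple connected graph with graph distance $d$, let $S$ be a multiset of $s$ vertices, $\delta>0$, and $\Phi^{*}(v)=\sum_{u\in S}d(u,v)$. Let $q$ be a vertex such that $\Phi^{*}(q)\le\Phi^{*}(v)+\delta s$ for every $v\in N(q)$. Then $\Lambda^{*}(q)\le\frac{s(1+\delta)}{2}$.
   Context: For vertices $q,v$, a vertex $u$ is consistent with $(q,v)$ if $q=v=u$, or $q\ne v$ and $v$ lies on a shortest path between $u$ and $q$; $N(q,v)$ is the set of such $u$. $N(q)$ is the neighbor set of $q$. $\Lambda^{*}(q)=\max_{v\in N(q)}|S\cap N(q,v)|$, where $S\cap X$ is the multiset of elements of $S$ lying in $X$ (with multiplicity); sums over $S$ are with multiplicity. *)

(* Defs.v *)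
From HB Require Import structures.
From mathcomp Require Import all_boot all_order all_algebra.
Set Implicit Arguments. Unset Strict Implicit. Unset Printing Implicit Defensive.
Import Order.TTheory GRing.Theory Num.Theory.

Definition simple_graph (T : finType) (e : rel T) : Prop :=
  symmetric e /\ irreflexive e.

Definition connected_graph (T : finType) (e : rel T) : Prop :=
  forall x y : T, connect e x y.

Definition walk_of_len (T : finType) (e : rel T) (x y : T) (n : nat) : bool :=
  [exists p : n.-tuple T, path e x p && (last x p == y)].

(* graph distance: least length of a walk from x to y (searched among
   0 .. #|T|-1, which suffices in a connected graph) *)
Definition gdist (T : finType) (e : rel T) (x y : T) : nat :=
  find (walk_of_len e x y) (iota 0 #|T|).

Definition consistent (T : finType) (e : rel T) (q v u : T) : bool :=
  ((q == v) && (v == u)) ||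
  ((q != v) && (gdist e u q == gdist e u v + gdist e v q)).

Definition Phi (T : finType) (e : rel T) (S : seq T) (v : T) : nat :=
  \sum_(u <- S) gdist e u v.

Definition Lambda (T : finType) (e : rel T) (S : seq T) (q : T) : nat :=
  \max_(v | e q v) count (consistent e q v) S.

(* Main.v *)
Require Import Defs.
From mathcomp Require Import all_boot all_order all_algebra.
From mathcomp Require Import lra zify.
Import Order.TTheory GRing.Theory Num.Theory.

Set Implicit Arguments. Unset Strict Implicit.
Section Aux.
Variables (T : finType) (e : rel T).

Lemma gd_le x y n : n < #|T| -> walk_of_len e x y n -> gdist e x y <= n.
Proof.
move=> hn hw; rewrite leqNgt; apply/negP => lt.
have := before_find 0 lt; rewrite nth_iota // add0n hw //.
Qed.

Lemma walk_ex x y : connect e x y -> exists n, (n < #|T|) && walk_of_len e x y n.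
Proof.
case/connectP=> p pp ->; case: (shortenP pp) => p' pp' up' _.
exists (size p'); apply/andP; split.
  have := max_card (mem (x :: p')); rewrite (card_uniqP up') /=; done.
apply/existsP; exists (in_tuple p'); by rewrite pp' eqxx.
Qed.

Lemma gd_walk x y : connect e x y ->
  gdist e x y < #|T| /\ walk_of_len e x y (gdist e x y).
Proof.
move=> c; have [n /andP[hn hw]] := walk_ex c.
have hh : has (walk_of_len e x y) (iota 0 #|T|).
  by apply/hasP; exists n => //; rewrite mem_iota.
split; first by move: hh; rewrite has_find size_iota.
have := nth_find 0 hh; rewrite nth_iota; last by move: hh; rewrite has_find size_iota.
by rewrite add0n.
Qed.

Lemma walk_ext x y z n : walk_of_len e x y n -> e y z -> walk_of_len e x z n.+1.
Proof.
case/existsP=> p /andP[pp /eqP ly] eyz; apply/existsP.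
have sz : size (rcons p z) == n.+1 by rewrite size_rcons size_tuple.
exists (Tuple sz) => /=.
by rewrite rcons_path pp ly eyz last_rcons eqxx.
Qed.

Lemma gd0 x y : connect e x y -> gdist e x y = 0 -> x = y.
Proof.
move=> c h; have [_ w] := gd_walk c; move: w; rewrite h.
case/existsP=> p /andP[_ /eqP]; by rewrite tuple0.
Qed.

Lemma gd_tri u q v : (forall x y, connect e x y) -> e q v ->
  gdist e u v <= (gdist e u q).+1.
Proof.
move=> c eqv; have [h1 w1] := gd_walk (c u q).
have [h2 _] := gd_walk (c u v).
case: (ltnP (gdist e u q).+1 #|T|) => h.
  exact: gd_le h (walk_ext w1 eqv).
by apply: leq_trans h; apply: ltnW.
Qed.
End Aux.

Local Open Scope ring_scope.

Theorem lemma13 (R : realFieldType) (T : finType) (e : rel T)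
  (S : seq T) (delta : R) (q : T) :
  simple_graph e -> connected_graph e -> 0 < delta ->
  (forall v : T, e q v ->
     (Phi e S q)%:R <= (Phi e S v)%:R + delta * (size S)%:R) ->
  (Lambda e S q)%:R <= (size S)%:R * (1 + delta) / 2.
Proof.
move=> [sym irr] conn dpos H.
rewrite /Lambda; apply: (big_ind (fun m : nat => m%:R <= (size S)%:R * (1 + delta) / 2)).
- apply: divr_ge0 => //; apply: mulr_ge0 => //; lra.
- move=> a b ha hb; case: (leqP a b) => hab.
    by [] .
  by [] .
move=> v eqv.
have qv : q != v by apply/eqP => E; move: eqv; rewrite E irr.
have key : (Phi e S v + 2 * count (consistent e q v) S <= Phi e S q + size S)%N.
  rewrite /Phi; elim: S {H} => [|u s IH]; first by rewrite !big_nil.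
  rewrite !big_cons /=.
  have tri := gd_tri u conn eqv.
  have pt : (gdist e u v + 2 * consistent e q v u <= gdist e u q + 1)%N.
    rewrite /consistent (negbTE qv) /=.
    case: eqP => [E|_]; last by rewrite muln0 addn0 addn1.
    have : gdist e v q != 0%N.
      by apply/eqP => /(gd0 (conn v q)) E2; move: qv; rewrite E2 eqxx.
    rewrite E; lia.
  lia.
have hv := H v eqv.
have key' : (Phi e S v)%:R + 2%:R * (count (consistent e q v) S)%:R
    <= (Phi e S q)%:R + (size S)%:R :> R.
  by rewrite -natrM -!natrD ler_nat.
have : (size S)%:R * delta >= 0 :> R by apply: mulr_ge0 => //; apply: ltW.
move: key' hv.
set c := (count _ _)%:R; set a := (Phi e S v)%:R; set b := (Phi e S q)%:R.
move=> *; lra.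
Qed.
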